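(* There exists an infinite strongly 3-separating set $M_\infty\subseteq\mathbb{N}$ with $1\in M_\infty$.
   Context: $\mathbb{N}=\{1,2,3,\dots\}$. A set $M\subseteq\mathbb{N}$ is 3-separating if $|M|\geq 3$ and for any two triples $(m_1,m_2,m_3)$ and $(n_1,n_2,n_3)$, each consisting of three distinct elements of $M$, we have $n_2(m_3-m_1)=n_1(m_3-m_2)+n_3(m_2-m_1)$ if and only if $(m_1,m_2,m_3)=(n_1,n_2,n_3)$. A set $M$ is strongly 3-separating if it is 3-separating and moreover for any two pairs $(m_1,m_2)$, $(n_1,n_2)$, each consisting of two distinct elements of $M$, we have $m_1-m_2+n_2-n_1=0$ if and only if $(m_1,m_2)=(n_1,n_2)$. *)

(* Defs.v *)
From Stdlib Require Import ZArith.
Open Scope Z_scope.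

Definition subset_Npos (M : nat -> Prop) : Prop :=
  forall m : nat, M m -> (1 <= m)%nat.

Definition card_ge3 (M : nat -> Prop) : Prop :=
  exists a b c : nat, M a /\ M b /\ M c /\ a <> b /\ a <> c /\ b <> c.

Definition infinite_set (M : nat -> Prop) : Prop :=
  forall N : nat, exists m : nat, M m /\ (N < m)%nat.

Definition three_separating (M : nat -> Prop) : Prop :=
  card_ge3 M /\
  forall m1 m2 m3 n1 n2 n3 : nat,
    M m1 -> M m2 -> M m3 -> m1 <> m2 -> m1 <> m3 -> m2 <> m3 ->
    M n1 -> M n2 -> M n3 -> n1 <> n2 -> n1 <> n3 -> n2 <> n3 ->
    (Z.of_nat n2 * (Z.of_nat m3 - Z.of_nat m1)
       = Z.of_nat n1 * (Z.of_nat m3 - Z.of_nat m2)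
         + Z.of_nat n3 * (Z.of_nat m2 - Z.of_nat m1)
     <-> (m1, m2, m3) = (n1, n2, n3)).

Definition strongly_three_separating (M : nat -> Prop) : Prop :=
  three_separating M /\
  forall m1 m2 n1 n2 : nat,
    M m1 -> M m2 -> m1 <> m2 -> M n1 -> M n2 -> n1 <> n2 ->
    (Z.of_nat m1 - Z.of_nat m2 + Z.of_nat n2 - Z.of_nat n1 = 0
     <-> (m1, m2) = (n1, n2)).

(* Main.v *)
Require Import Defs.
From Stdlib Require Import ZArith Lia Arith.
Local Open Scope nat_scope.

Lemma p_lt : forall x y : nat, (x < y)%nat -> (4 * 4^x <= 4^y)%nat.
Proof.
  intros x y H. replace (4 * 4^x)%nat with (4^(S x))%nat by (simpl; lia).
  apply Nat.pow_le_mono_r; lia.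
Qed.

Lemma p_le : forall x y : nat, (x <= y)%nat -> (4^x <= 4^y)%nat.
Proof. intros; apply Nat.pow_le_mono_r; lia. Qed.

Lemma p_pos : forall x : nat, (1 <= 4^x)%nat.
Proof. intros. pose proof (p_le 0 x). simpl in H. lia. Qed.

Lemma p_inj : forall x y : nat, 4^x = 4^y -> x = y.
Proof. intros. apply (Nat.pow_inj_r 4); auto. Qed.

Lemma max2 : forall a b c d : nat, (4^a + 4^b = 4^c + 4^d)%nat ->
  (b <= a)%nat -> (d <= c)%nat -> a = c.
Proof.
  intros a b c d H H1 H2.
  pose proof (p_le _ _ H1). pose proof (p_le _ _ H2).
  pose proof (p_pos b). pose proof (p_pos d).
  destruct (Nat.lt_trichotomy a c) as [h|[h|h]]; auto.
  - pose proof (p_lt _ _ h); lia.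
  - pose proof (p_lt _ _ h); lia.
Qed.

Lemma L2 : forall a b c d : nat, (4^a + 4^b = 4^c + 4^d)%nat ->
  (a = c /\ b = d) \/ (a = d /\ b = c).
Proof.
  intros a b c d H.
  destruct (Nat.le_ge_cases b a); destruct (Nat.le_ge_cases d c).
  - assert (a = c) by (eapply max2; eauto). subst.
    assert (b = d) by (apply p_inj; lia). auto.
  - assert (a = d) by (eapply (max2 a b d c); eauto; lia). subst.
    assert (b = c) by (apply p_inj; lia). auto.
  - assert (b = c) by (eapply (max2 b a c d); eauto; lia). subst.
    assert (a = d) by (apply p_inj; lia). auto.
  - assert (b = d) by (eapply (max2 b a d c); eauto; lia). subst.
    assert (a = c) by (apply p_inj; lia). auto.
Qed.

Lemma max3 : forall a b c d e f : nat, (4^a + 4^b + 4^c = 4^d + 4^e + 4^f)%nat ->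
  (b <= a)%nat -> (c <= a)%nat -> (e <= d)%nat -> (f <= d)%nat -> a = d.
Proof.
  intros a b c d e f H H1 H2 H3 H4.
  pose proof (p_le _ _ H1). pose proof (p_le _ _ H2).
  pose proof (p_le _ _ H3). pose proof (p_le _ _ H4).
  pose proof (p_pos b). pose proof (p_pos c). pose proof (p_pos e). pose proof (p_pos f).
  destruct (Nat.lt_trichotomy a d) as [h|[h|h]]; auto.
  - pose proof (p_lt _ _ h); lia.
  - pose proof (p_lt _ _ h); lia.
Qed.

Lemma L3 : forall a b c d e f : nat, (4^a + 4^b + 4^c = 4^d + 4^e + 4^f)%nat ->
  (a = d /\ b = e /\ c = f) \/ (a = d /\ b = f /\ c = e) \/
  (a = e /\ b = d /\ c = f) \/ (a = e /\ b = f /\ c = d) \/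
  (a = f /\ b = d /\ c = e) \/ (a = f /\ b = e /\ c = d).
Proof.
  intros a b c d e f H.
  assert (HL : ((b <= a /\ c <= a) \/ (a <= b /\ c <= b) \/ (a <= c /\ b <= c))%nat) by lia.
  assert (HR : ((e <= d /\ f <= d) \/ (d <= e /\ f <= e) \/ (d <= f /\ e <= f))%nat) by lia.
  destruct HL as [[? ?]|[[? ?]|[? ?]]]; destruct HR as [[? ?]|[[? ?]|[? ?]]].
  - assert (a = d) by (eapply (max3 a b c d e f); eauto; lia). subst.
    assert (4^b + 4^c = 4^e + 4^f)%nat by lia. match goal with Hh : (_ + _ = _ + _) |- _ => apply L2 in Hh end; lia.
  - assert (a = e) by (eapply (max3 a b c e d f); eauto; lia). subst.
    assert (4^b + 4^c = 4^d + 4^f)%nat by lia. match goal with Hh : (_ + _ = _ + _) |- _ => apply L2 in Hh end; lia.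
  - assert (a = f) by (eapply (max3 a b c f d e); eauto; lia). subst.
    assert (4^b + 4^c = 4^d + 4^e)%nat by lia. match goal with Hh : (_ + _ = _ + _) |- _ => apply L2 in Hh end; lia.
  - assert (b = d) by (eapply (max3 b a c d e f); eauto; lia). subst.
    assert (4^a + 4^c = 4^e + 4^f)%nat by lia. match goal with Hh : (_ + _ = _ + _) |- _ => apply L2 in Hh end; lia.
  - assert (b = e) by (eapply (max3 b a c e d f); eauto; lia). subst.
    assert (4^a + 4^c = 4^d + 4^f)%nat by lia. match goal with Hh : (_ + _ = _ + _) |- _ => apply L2 in Hh end; lia.
  - assert (b = f) by (eapply (max3 b a c f d e); eauto; lia). subst.
    assert (4^a + 4^c = 4^d + 4^e)%nat by lia. match goal with Hh : (_ + _ = _ + _) |- _ => apply L2 in Hh end; lia.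
  - assert (c = d) by (eapply (max3 c a b d e f); eauto; lia). subst.
    assert (4^a + 4^b = 4^e + 4^f)%nat by lia. match goal with Hh : (_ + _ = _ + _) |- _ => apply L2 in Hh end; lia.
  - assert (c = e) by (eapply (max3 c a b e d f); eauto; lia). subst.
    assert (4^a + 4^b = 4^d + 4^f)%nat by lia. match goal with Hh : (_ + _ = _ + _) |- _ => apply L2 in Hh end; lia.
  - assert (c = f) by (eapply (max3 c a b f d e); eauto; lia). subst.
    assert (4^a + 4^b = 4^d + 4^e)%nat by lia. match goal with Hh : (_ + _ = _ + _) |- _ => apply L2 in Hh end; lia.
Qed.

Definition Ex (e : nat) : Prop := exists k : nat, e = (4^k - 1)%nat.
Definition Mset (n : nat) : Prop := exists e, Ex e /\ n = (4^e)%nat.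

Lemma sidon : forall e1 e2 f1 f2, Ex e1 -> Ex e2 -> Ex f1 -> Ex f2 ->
  (f1 + e2 = f2 + e1)%nat -> f1 <> f2 -> f1 = e1.
Proof.
  intros e1 e2 f1 f2 [k1 ->] [k2 ->] [j1 ->] [j2 ->] H Hn.
  pose proof (p_pos k1). pose proof (p_pos k2). pose proof (p_pos j1). pose proof (p_pos j2).
  assert (4^j1 + 4^k2 = 4^j2 + 4^k1)%nat by lia.
  apply L2 in H4. destruct H4 as [[-> ->]|[-> ->]]; lia.
Qed.

Theorem corollary2p5 :
  exists M : nat -> Prop,
    subset_Npos M /\ infinite_set M /\ strongly_three_separating M /\ M 1%nat.
Proof.
  exists Mset. split; [|split; [|split]].
  - intros m [e [_ ->]]. apply p_pos.
  - intros N. exists (4^(4^N - 1))%nat. split.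
    + exists (4^N - 1)%nat. split; auto. exists N; auto.
    + pose proof (Nat.pow_gt_lin_r 4 N ltac:(lia)).
      pose proof (Nat.pow_gt_lin_r 4 (4^N - 1) ltac:(lia)). lia.
  - split; [split|].
    + exists (4^(4^0-1))%nat, (4^(4^1-1))%nat, (4^(4^2-1))%nat.
      split; [exists (4^0-1)%nat; split; [exists 0%nat|]; auto|].
      split; [exists (4^1-1)%nat; split; [exists 1%nat|]; auto|].
      split; [exists (4^2-1)%nat; split; [exists 2%nat|]; auto|].
      split; [|split]; intro Hc; apply p_inj in Hc; discriminate.
    + intros m1 m2 m3 n1 n2 n3 [e1 [E1 ->]] [e2 [E2 ->]] [e3 [E3 ->]] D12 D13 D23
        [f1 [F1 ->]] [f2 [F2 ->]] [f3 [F3 ->]] G12 G13 G23.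
      split.
      * intro H.
        assert (Hn : (4^f2 * 4^e3 + 4^f1 * 4^e2 + 4^f3 * 4^e1
                     = 4^f3 * 4^e2 + 4^f2 * 4^e1 + 4^f1 * 4^e3)%nat).
        { apply Nat2Z.inj. rewrite !Nat2Z.inj_add, !Nat2Z.inj_mul. lia. }
        rewrite <- !Nat.pow_add_r in Hn. apply L3 in Hn.
        assert (e1 <> e2) by (intro; subst; auto).
        assert (e1 <> e3) by (intro; subst; auto).
        assert (e2 <> e3) by (intro; subst; auto).
        assert (f1 <> f2) by (intro; subst; auto).
        assert (f1 <> f3) by (intro; subst; auto).
        assert (f2 <> f3) by (intro; subst; auto).
        assert (A1 : (f1 + e2 = f2 + e1)%nat) by lia.
        assert (A2 : (f2 + e3 = f3 + e2)%nat) by lia.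
        pose proof (sidon e1 e2 f1 f2 E1 E2 F1 F2 A1 H3).
        assert (f2 = e2) by lia. assert (f3 = e3) by lia. subst. reflexivity.
      * intro H. injection H as -> -> ->. ring.
    + intros m1 m2 n1 n2 [e1 [E1 ->]] [e2 [E2 ->]] D12 [f1 [F1 ->]] [f2 [F2 ->]] G12.
      split.
      * intro H.
        assert (Hn : (4^e1 + 4^f2 = 4^e2 + 4^f1)%nat) by lia.
        apply L2 in Hn. destruct Hn as [[-> ->]|[-> ->]]; [exfalso; auto|reflexivity].
      * intro H. injection H as -> ->. ring.
  - exists 0%nat. split; auto. exists 0%nat. reflexivity.
Qed.
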